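(* Let $m,b\ge1$ and let $\varepsilon:(\mathbb{F}_2)^{mb}\to(\mathbb{F}_2)^{2^m b}$ be defined by $\varepsilon(v_1,\dots,v_b)=(\varepsilon'(v_1),\dots,\varepsilon'(v_b))$ for $v_j\in(\mathbb{F}_2)^m$. Then $\dim_{\mathbb{F}_2}\langle\varepsilon((\mathbb{F}_2)^{mb})\rangle=2^m b-(b-1)$.
   Context: Identify $(\mathbb{F}_2)^m$ with $\mathbb{F}_{2^m}=\mathbb{F}_2[x]/(p)$ for a primitive polynomial $p$ of degree $m$, and let $\gamma$ be a primitive element of $\mathbb{F}_{2^m}$ (a root of $p$). Let $e_1,\dots,e_{2^m}$ be the standard basis of $(\mathbb{F}_2)^{2^m}$, and define $\varepsilon':\mathbb{F}_{2^m}\to(\mathbb{F}_2)^{2^m}$ by $\varepsilon'(0)=e_1$ and $\varepsilon'(\gamma^i)=e_{i+1}$ for $1\le i\le 2^m-1$. $\langle S\rangle$ denotes the $\mathbb{F}_2$-linear span of $S$. *)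

(* Defs.v *)
From HB Require Import structures.
From mathcomp Require Import all_boot all_algebra.
From mathcomp Require Import qpoly qfpoly.
Set Implicit Arguments. Unset Strict Implicit. Unset Printing Implicit Defensive.
Import GRing.Theory.
Local Open Scope ring_scope.

(* The field F_{2^m} is modelled as {poly %/ p} = F_2[x]/(p) for a primitive
   polynomial p of degree m (hypotheses of the theorem); gamma = 'qX, the class
   of x, which is a root of p. *)

Definition vec_to_field (p : {poly 'F_2}) (m : nat) (v : 'rV['F_2]_m) : {poly %/ p} :=
  in_qpoly p (rVpoly v).
Arguments vec_to_field p m v : clear implicits.

(* eps' : F_{2^m} -> (F_2)^(2^m).  Coordinates are 0-based: coordinate k
   corresponds to e_(k+1).  eps'(0) = e_1 (coordinate 0), and
   eps'(gamma^i) = e_(i+1) (coordinate i) for 1 <= i <= 2^m - 1. *)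
Definition eps' (p : {poly 'F_2}) (m : nat) (x : {poly %/ p}) : 'rV['F_2]_(2 ^ m) :=
  \row_(k < 2 ^ m)
    (if x == 0 then (k == 0%N :> nat)
     else (0 < k)%N && ('qX ^+ k == x))%:R.
Arguments eps' p m x : clear implicits.

(* eps : (F_2)^(m b) -> (F_2)^(2^m b); the input is split into b consecutive
   blocks v_1, ..., v_b of length m (row-major reshaping via vec_mx), and the
   output is the concatenation (eps'(v_1), ..., eps'(v_b)) (via mxvec). *)
Definition eps (p : {poly 'F_2}) (m b : nat) (v : 'rV['F_2]_(b * m)) :
    'rV['F_2]_(b * 2 ^ m) :=
  mxvec (\matrix_(j < b, k < 2 ^ m)
           eps' p m (vec_to_field p m (row j (vec_mx v))) 0 k).
Arguments eps p m b v : clear implicits.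

(* Main.v *)
Require Import Defs.
From HB Require Import structures.
From mathcomp Require Import all_boot all_algebra.
From mathcomp Require Import qpoly qfpoly.
From mathcomp Require Import all_field zify.
Set Implicit Arguments. Unset Strict Implicit. Unset Printing Implicit Defensive.
Import GRing.Theory.
Local Open Scope ring_scope.

Section LA.
Variable F : fieldType.
Variables b n : nat.

Definition bsum (w : 'rV[F]_(b*n)) : 'rV[F]_b := \row_j \sum_k vec_mx w j k.

Fact bsum_lin : linear bsum.
Proof.
move=> a u v; apply/rowP=> j; rewrite !mxE linearP /=.
rewrite mulr_sumr -big_split /=; apply: eq_bigr => k _; by rewrite !mxE.
Qed.

HB.instance Definition _ := GRing.isLinear.Build F _ _ _ bsum bsum_lin.

Definition Mc (c : 'I_b -> 'I_n) : 'M[F]_(b, n) := \matrix_(j, k) (k == c j)%:R.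
Definition G c : 'rV[F]_(b*n) := mxvec (Mc c).

Lemma bsumG c : bsum (G c) = const_mx 1.
Proof.
apply/rowP=> j; rewrite !mxE /G mxvecK (bigD1 (c j)) //= big1 ?addr0 ?mxE ?eqxx //.
by move=> k /negPf; rewrite mxE => ->.
Qed.


Lemma dim_spanG (X : seq 'rV[F]_(b*n)) (k0 : 'I_n) : (0 < b)%N ->
  (forall x, x \in X -> exists c, x = G c) ->
  (forall c, G c \in <<X>>%VS) ->
  \dim <<X>> = ((b*n - b).+1)%N.
Proof.
move=> b_gt0 HX HG.
pose s := linfun bsum.
have sE w : s w = bsum w by rewrite lfunE.
pose K := lker s.
pose g0 := G (fun _ => k0).
have dimK : \dim K = (b*n - b)%N.
  have := limg_ker_dim s fullv; rewrite capfv.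
  have -> : (s @: fullv)%VS = fullv.
    apply/eqP; rewrite eqEsubv subvf /=; apply/subvP => y _.
    have -> : y = s (mxvec (\matrix_(j, k) ((k == k0)%:R * y 0 j))).
      rewrite sE; apply/rowP => j; rewrite !mxE mxvecK (bigD1 k0) //= big1.
        by rewrite mxE eqxx mul1r addr0.
      by move=> k /negPf; rewrite mxE => ->; rewrite mul0r.
    exact: memv_img (memvf _).
  rewrite !dimvf !dim_matrix /= => H.
  have E : forall x : nat, (1 * x)%N = x by move=> x; rewrite mul1n.
  have H' : (\dim K + b = b * n)%N.
    by move: H; rewrite !mul1r.
  lia.
have bsg0 : bsum g0 != 0.
  rewrite bsumG; apply/eqP => /rowP /(_ (Ordinal b_gt0)); rewrite !mxE.
  by move/eqP; rewrite oner_eq0.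
have g0n0 : g0 != 0 by apply: contraNneq bsg0 => ->; rewrite linear0.
have Kg0 : (K :&: <[g0]>)%VS = 0%VS.
  apply/eqP; rewrite -subv0; apply/subvP => v /memv_capP [].
  rewrite memv_ker sE => /eqP Hv /vlineP [a Ha]; rewrite memv0.
  move: Hv; rewrite Ha linearZ /= => /eqP; rewrite scaler_eq0 (negPf bsg0) orbF.
  by move/eqP->; rewrite scale0r.
have eqS : <<X>>%VS = (K + <[g0]>)%VS.
  apply/eqP; rewrite eqEsubv; apply/andP; split.
    apply/span_subvP => x /HX [c ->]; rewrite -(subrK g0 (G c)).
    apply: memv_add; last exact: memv_line.
    by rewrite memv_ker sE linearB /= !bsumG subrr.
  rewrite subv_add -memvE HG andbT; apply/subvP => w.
  rewrite memv_ker sE => /eqP Hw.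
  pose cjk (j : 'I_b) (k : 'I_n) := fun j' : 'I_b => if j' == j then k else k0.
  have -> : w = \sum_j \sum_k (vec_mx w j k) *: (G (cjk j k) - g0).
    apply: (can_inj vec_mxK); rewrite linear_sum.
    under eq_bigr => j _ do rewrite linear_sum.
    apply/matrixP => j0 k1; rewrite summxE.
    under eq_bigr => j _ do rewrite summxE.
    have T j k : vec_mx (vec_mx w j k *: (G (cjk j k) - g0)) j0 k1
       = vec_mx w j k * ((k1 == cjk j k j0)%:R - (k1 == k0)%:R).
      by rewrite linearZ linearB /= !mxvecK !mxE.
    rewrite (bigD1 j0) //= [X in _ + X]big1 => [|j /negPf jj0]; last first.
      rewrite big1 // => k _.
      rewrite T /cjk; have -> : (j0 == j) = false by rewrite eq_sym.
      by rewrite subrr mulr0.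
    rewrite addr0.
    under eq_bigr => k _ do rewrite T /cjk eqxx mulrBr.
    rewrite sumrB -mulr_suml.
    have : (bsum w) 0 j0 = 0 by rewrite Hw mxE.
    rewrite mxE => ->; rewrite mul0r subr0 (bigD1 k1) //= big1 ?eqxx ?mulr1 ?addr0 //.
    by move=> k /negPf kk; rewrite eq_sym kk mulr0.
  apply: memv_suml => j _; apply: memv_suml => k _; apply: memvZ.
  by apply: memvB; apply: HG.
rewrite eqS dimv_disjoint_sum // dimK dim_vline g0n0 addn1.
done.
Qed.

End LA.

Section FF.
Variables (m : nat) (p : {poly 'F_2}).
Hypotheses (Hm : (1 <= m)%N) (Hs : size p = m.+1) (Hp : primitive_poly p).

Local Notation T := {poly %/ p}.

Lemma pmonic : p \is monic.
Proof. by case/primitive_polyP: Hp => [[_ ->]]. Qed.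

Lemma cardT : #|T| = (2 ^ m)%N.
Proof. by rewrite card_monic_qpoly ?Hs ?pmonic // card_Fp. Qed.

Local Notation v := (2 ^ m).-1.

Lemma v_gt0 : (0 < v)%N.
Proof. rewrite -ltnS prednK ?expn_gt0 //; rewrite -{1}(expn0 2) ltn_exp2l //. Qed.

Lemma qX_in (q : {poly 'F_2}) : (in_qpoly p q == 0) = (p %| q).
Proof. exact: primitive_poly_in_qpoly_eq0. Qed.

Lemma qXv : 'qX ^+ v = 1 :> T.
Proof.
case/primitive_polyP: Hp => _ H _; move: H; rewrite card_monic_qpoly ?Hs ?pmonic // card_Fp // -qX_in.
by rewrite rmorphB rmorphXn /= rmorph1 subr_eq0 => /eqP.
Qed.

Lemma qXn1 n : (0 < n < v)%N -> 'qX ^+ n != 1 :> T.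
Proof.
case/primitive_polyP: Hp => _ _; rewrite card_monic_qpoly ?Hs ?pmonic // card_Fp // => /= H /H; rewrite -qX_in.
by rewrite rmorphB rmorphXn /= rmorph1 subr_eq0.
Qed.

Lemma qX_inv i : 'qX ^+ (v * i - i) * 'qX ^+ i = 1 :> T.
Proof.
rewrite -exprD subnK; last by rewrite leq_pmull // v_gt0.
by rewrite exprM qXv expr1n.
Qed.

Lemma qXneq0 i : 'qX ^+ i != 0 :> T.
Proof.
apply/eqP => H; have := qX_inv i; rewrite H mulr0 => /eqP.
by rewrite eq_sym oner_eq0.
Qed.

Lemma qX_inj i j : (0 < i <= v)%N -> (0 < j <= v)%N -> 'qX ^+ i = 'qX ^+ j :> T -> i = j.
Proof.
wlog ij : i j / (i <= j)%N => [W|] Hi Hj E.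
  case: (leqP i j) => ij; first exact: W.
  by symmetry; apply: W => //; apply: ltnW.
have [->//|ltij] : i = j \/ (i < j)%N by lia.
exfalso.
have E2 : 'qX ^+ (j - i) = 1 :> T.
  have := congr1 (fun z => 'qX ^+ (v * i - i) * z) E; rewrite /= qX_inv => ->.
  rewrite -exprD; have -> : (v * i - i + j = v * i + (j - i))%N.
    have : (i <= v * i)%N by rewrite leq_pmull // v_gt0.
    lia.
  by rewrite exprD exprM qXv expr1n mul1r.
have : (0 < j - i < v)%N by lia.
by move/qXn1; rewrite E2 eqxx.
Qed.

Lemma qX_onto x : x != 0 -> exists i : 'I_v, 'qX ^+ i.+1 = x :> T.
Proof.
move=> x0.
pose A := [set ('qX ^+ (val i).+1 : T) | i : 'I_v].
pose B := [set y : T | y != 0].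
have AB : A \subset B by apply/subsetP => y /imsetP [i _ ->]; rewrite inE qXneq0.
have cA : #|A| = v.
  rewrite card_imset ?card_ord // => i j /qX_inj H; apply/val_inj/eq_add_S/H.
    by rewrite /= ltn_ord.
  by rewrite /= ltn_ord.
have cB : #|B| = v.
  rewrite -cardT -(cardC1 (0 : T)) -cardsE; apply: eq_card => y; by rewrite !inE.
have : A == B by rewrite eqEcard AB cA cB leqnn.
move/eqP => AeB; have : x \in A by rewrite AeB inE.
by case/imsetP => i _ ->; exists i.
Qed.

Lemma eps'_ok x : exists k : 'I_(2 ^ m), forall k', eps' p m x 0 k' = (k' == k)%:R.
Proof.
have v1 : (v.+1 = 2 ^ m)%N by rewrite prednK // expn_gt0.
have [->|x0] := eqVneq x 0.
  exists (Ordinal (expn_gt0 2 m)) => k'; by rewrite mxE eqxx.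
have [i Hi] := qX_onto x0.
have lt : (i.+1 < 2 ^ m)%N by have := ltn_ord i; lia.
exists (Ordinal lt) => k'; rewrite mxE (negPf x0); congr (_%:R); congr (nat_of_bool _).
apply/idP/idP.
  case/andP => k0 /eqP E; rewrite -Hi in E; apply/eqP/val_inj => /=.
  apply: qX_inj E; first by rewrite k0 -ltnS v1 ltn_ord.
  by rewrite ltn_ord.
by move/eqP => -> /=; rewrite Hi eqxx.
Qed.

Lemma eps'_onto (k : 'I_(2 ^ m)) : exists x, forall k', eps' p m x 0 k' = (k' == k)%:R.
Proof.
have v1 : (v.+1 = 2 ^ m)%N by rewrite prednK // expn_gt0.
case: (posnP k) => k0.
  exists 0 => k'; rewrite mxE eqxx; congr (_%:R); by rewrite -val_eqE /= k0.
exists ('qX ^+ k) => k'; rewrite mxE (negPf (qXneq0 _)); congr (_%:R); congr (nat_of_bool _).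
apply/idP/idP.
  case/andP => kk /eqP E; apply/eqP/val_inj => /=.
  apply: qX_inj E; first by rewrite kk -ltnS v1 ltn_ord.
  by rewrite k0 -ltnS v1 ltn_ord.
by move/eqP => ->; rewrite k0 eqxx.
Qed.

Lemma vtf_onto (x : T) : exists w : 'rV['F_2]_m, vec_to_field p m w = x.
Proof.
have mk : mk_monic p = p by rewrite /mk_monic Hs ltnS Hm pmonic.
have sx : (size (x : {poly 'F_2}) <= m)%N.
  by apply: leq_trans (size_npoly x) _; rewrite mk Hs.
exists (poly_rV (x : {poly 'F_2})); apply/val_inj.
rewrite /vec_to_field poly_rV_K //= Pdiv.Ring.rmodp_small //.
exact: size_mk_monic.
Qed.

Lemma eps_G (b : nat) (w : 'rV['F_2]_(b * m)) :
  exists c, eps p m b w = @G 'F_2 b (2 ^ m) c.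
Proof.
have [c Hc] := fin_all_exists (fun j : 'I_b => eps'_ok (vec_to_field p m (row j (vec_mx w)))).
exists c; rewrite /eps /G; congr mxvec; apply/matrixP => j k.
by rewrite [LHS]mxE Hc mxE.
Qed.

Lemma G_eps (b : nat) (c : 'I_b -> 'I_(2 ^ m)) :
  exists w, eps p m b w = @G 'F_2 b (2 ^ m) c.
Proof.
have H j : exists u : 'rV['F_2]_m, forall k',
    eps' p m (vec_to_field p m u) 0 k' = (k' == c j)%:R.
  have [x Hx] := eps'_onto (c j); have [u Hu] := vtf_onto x.
  by exists u; rewrite Hu.
have [u Hu] := fin_all_exists H.
exists (mxvec (\matrix_(j, l) u j 0 l)); rewrite /eps /G; congr mxvec.
apply/matrixP => j k; rewrite [LHS]mxE mxvecK.
have -> : row j (\matrix_(j, l) u j 0 l) = u j by apply/rowP => l; rewrite !mxE.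
by rewrite Hu mxE.
Qed.

End FF.

Theorem mainTheorem5 (m b : nat) (p : {poly 'F_2}) :
  (1 <= m)%N -> (1 <= b)%N ->
  size p = m.+1 -> primitive_poly p ->
  \dim <<[seq eps p m b v | v <- enum [set: 'rV['F_2]_(b * m)]]>>%VS
    = (2 ^ m * b - (b - 1))%N.
Proof.
move=> Hm Hb Hs Hp.
have n_gt0 : (0 < 2 ^ m)%N by rewrite expn_gt0.
rewrite (@dim_spanG 'F_2 b (2 ^ m) _ (Ordinal n_gt0) Hb).
- have : (b <= b * 2 ^ m)%N by rewrite leq_pmulr.
  rewrite [(2 ^ m * b)%N]mulnC; lia.
- by move=> x /mapP [w _ ->]; exact: eps_G.
- move=> c; have [w <-] := G_eps Hm Hs Hp c.
  by apply: memv_span; apply: map_f; rewrite mem_enum inE.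
Qed.
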